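(* Let $R$ be a ring with identity and involution $*$. The following conditions are equivalent: (1) $R$ is directly finite, i.e. for all $a,b\in R$, $ab=1$ implies $ba=1$; (2) for all $a,b\in R$: $aba=a$, $(ab)^*=ab$ and $ab^2=b$ hold if and only if $a$ is core invertible with $a^{\oplus}=b$.
   Context: An involution on $R$ satisfies $(a^* )^*=a$, $(ab)^*=b^*a^*$, $(a+b)^*=a^*+b^*$. An element $x\in R$ is a core inverse of $a$ if $axa=a$, $xR=aR$ and $Rx=Ra^*$; it is unique when it exists and is denoted $a^{\oplus}$. *)

(* Defs.v *)
From mathcomp Require Import all_boot all_algebra.
Set Implicit Arguments. Unset Strict Implicit. Unset Printing Implicit Defensive.
Import GRing.Theory.
Local Open Scope ring_scope.

Definition involution (R : pzRingType) (star : R -> R) : Prop :=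
  [/\ forall a : R, star (star a) = a,
      forall a b : R, star (a * b) = star b * star a &
      forall a b : R, star (a + b) = star a + star b].

Definition rideal (R : pzRingType) (x : R) : R -> Prop := fun y => exists r : R, y = x * r.
Definition lideal (R : pzRingType) (x : R) : R -> Prop := fun y => exists r : R, y = r * x.

Definition core_inverse (R : pzRingType) (star : R -> R) (a x : R) : Prop :=
  [/\ a * x * a = a,
      (forall y, rideal x y <-> rideal a y) &
      (forall y, lideal x y <-> lideal (star a) y)].

Definition directly_finite (R : pzRingType) : Prop :=
  forall a b : R, a * b = 1 -> b * a = 1.

(* Main.v *)
Require Import Defs.
From mathcomp Require Import all_boot all_algebra.
Import GRing.Theory.
Local Open Scope ring_scope.

Lemma core_gen (R : pzRingType) (star : R -> R) (Hstar : involution star) (a b : R) :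
  core_inverse star a b -> a * b * a = a /\ star (a * b) = a * b /\ a * b ^+ 2 = b.
Proof.
case: Hstar => inv mul add [H1 H2 H3].
have [s Hs] : rideal a b by apply/H2; exists 1; rewrite mulr1.
have [u Hu] : lideal (star a) b by apply/H3; exists 1; rewrite mul1r.
have Hb : b = b * star (a * b).
  by rewrite {1}Hu -{1}H1 mul mulrA -Hu.
have Hp : a * b = a * b * star (a * b) by rewrite -mulrA -Hb.
have Hsp : star (a * b) = a * b by rewrite {1}Hp mul inv -Hp.
split => //; split => //.
by rewrite expr2 mulrA {2}Hs mulrA H1 -Hs.
Qed.

Lemma star1 (R : pzRingType) (star : R -> R) (Hstar : involution star) : star 1 = 1.
Proof.
case: Hstar => inv mul add.
have := mul (star 1) 1; rewrite mulr1 inv mulr1 => E; by rewrite -E.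
Qed.

Theorem theorem3p9 (R : pzRingType) (star : R -> R) (Hstar : involution star) :
  directly_finite R <->
  (forall a b : R,
     (a * b * a = a /\ star (a * b) = a * b /\ a * b ^+ 2 = b) <->
     core_inverse star a b).
Proof.
split.
- move=> DF a b; split; last exact: core_gen.
  case=> H1 [H2 H3].
  have Fb : a * b * b = b by rewrite -mulrA -expr2.
  pose x := a + (1 - a * b); pose y := b + (1 - b * a).
  have Hxy : x * y = 1.
    rewrite /x /y !(mulrDl, mulrDr, mulrN, mulNr, mulr1, mul1r) !mulrA H1 Fb.
    rewrite opprK subrr addr0 -!addrA [b + _]addrCA [b + _]addrCA addNKr.
    by rewrite [-(b*a) + _]addrCA addNr addr0 addrCA subrr addr0.
  have Hyx := DF _ _ Hxy.
  have Hxb : x * b = a * b by rewrite /x mulrDl mulrBl mul1r Fb subrr addr0.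
  have Hya : y * a = b * a.
    by rewrite -{1}H1 -Hxb !mulrA Hyx mul1r.
  have Hbaa : b * a * a = a.
    move: Hya; rewrite /y mulrDl mulrBl mul1r => /eqP.
    rewrite -subr_eq0 addrAC subrr add0r subr_eq0 => /eqP E; by rewrite -E.
  have Hbab : b * a * b = b by rewrite -{2}H3 expr2 !mulrA Hbaa Fb.
  case: Hstar => inv mul add.
  split => // z; split.
  + by case=> r ->; exists (b * b * r); rewrite !mulrA Fb.
  + by case=> r ->; exists (a * a * r); rewrite !mulrA Hbaa.
  + case=> r ->; exists (r * b * star b).
    by rewrite -!mulrA -mul H2 (mulrA b a b) Hbab.
  + case=> r ->; exists (r * star a * a).
    have : star a = star a * (a * b) by rewrite -H2 -mul H1.
    by move=> E; rewrite -!mulrA -E.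
- move=> H a b Hab.
  have Hs1 := @star1 _ _ Hstar.
  have [_ H2 _] : core_inverse star a b.
    apply/H; split; first by rewrite Hab mul1r.
    split; first by rewrite Hab Hs1.
    by rewrite expr2 mulrA Hab mul1r.
  have [r Hr] : rideal b a by apply/H2; exists 1; rewrite mulr1.
  have Hbaa : b * a * a = a by rewrite {2}Hr mulrA -(mulrA b a b) Hab mulr1 -Hr.
  by rewrite -(mulr1 (b * a)) -Hab mulrA Hbaa.
Qed.
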